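(* Let $\alpha>0$ and $\eta(\tau;\alpha)=\dfrac{\Phi(\tau)}{\Phi(\tau)+\Phi(\alpha(1-\tau))}$ with $\Phi(\tau)=\tau^{m+1}$. Then $\eta(\cdot;\alpha):[0,1]\to\mathbb{R}$ is a transition function, i.e., for all $\mu\in\{1,\dots,m\}$: (i) $\eta^{(\mu)}(\tau;\alpha)$ exists $\forall\tau\in[0,1]$; (ii) $\eta^{(\mu)}(0;\alpha)=\eta^{(\mu)}(1;\alpha)=0$; (iii) $\eta(0;\alpha)=0$, $\eta(1;\alpha)=1$; (iv) $\lim_{\alpha\to0}\eta(\tau;\alpha)=1$ for all $\tau\in(0,1]$.
   Context: $m\in\mathbb{N}$ is the order of the integrator dynamics considered; $\eta^{(\mu)}$ denotes the $\mu$-th derivative with respect to $\tau$. *)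

(* Defs.v *)
From Stdlib Require Import Reals.
From Coquelicot Require Import Coquelicot.
Open Scope R_scope.

Definition Phi (m : nat) (t : R) : R := t ^ (m + 1).

Definition eta (m : nat) (alpha : R) (t : R) : R :=
  Phi m t / (Phi m t + Phi m (alpha * (1 - t))).

(* Main.v *)
Require Import Defs.
From Stdlib Require Import Reals Lra Lia List.
From Coquelicot Require Import Coquelicot.
Open Scope R_scope.
Import ListNotations.
Record trm := mk { tc : R; ta : nat; tb : nat; tj : nat }.
Definition Dn (m : nat) (al x : R) := x^(S m) + (al*(1-x))^(S m).
Definition ev m al (u:trm) x := tc u * x ^ ta u * (1-x)^tb u / (Dn m al x)^tj u.
Fixpoint evl m al (l:list trm) x := match l with nil => 0 | u::l => ev m al u x + evl m al l x end.
Definition dt m al u :=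
  [mk (tc u * INR (ta u)) (pred (ta u)) (tb u) (tj u);
   mk (- tc u * INR (tb u)) (ta u) (pred (tb u)) (tj u);
   mk (- tc u * INR (tj u) * INR (S m)) (ta u + m) (tb u) (S (tj u));
   mk (tc u * INR (tj u) * INR (S m) * al^(S m)) (ta u) (tb u + m) (S (tj u))].
Definition dl m al l := flat_map (dt m al) l.

Ltac genpow := repeat match goal with |- context [?y ^ ?n] => is_var n; let z := fresh "P" in set (z := y ^ n) in *; clearbody z end.

Lemma ev_derive m al u x : Dn m al x <> 0 ->
  is_derive (ev m al u) x (evl m al (dt m al u) x).
Proof.
  intros H. destruct u as [c a b j]. unfold dt. cbn [evl tc ta tb tj]. unfold ev, Dn in *. cbn [tc ta tb tj].
  auto_derive.
  { apply pow_nonzero. exact H. }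
  change (match m with 0%nat => 1 | S _ => INR m + 1 end) with (INR (S m)).
  change (1 + - x) with (1 - x).
  change (x * x ^ m + al * (1 - x) * (al * (1 - x)) ^ m) with (x ^ S m + (al * (1 - x)) ^ S m).
  set (D := x ^ S m + (al * (1 - x)) ^ S m) in *.
  assert (HD: D ^ j <> 0) by (apply pow_nonzero; auto).
  rewrite !pow_add.

  replace ((al * (1 - x)) ^ m) with (al^m * (1-x)^m) by (rewrite Rpow_mult_distr; ring).
  clearbody D.
  destruct a as [|a]; destruct b as [|b]; destruct j as [|j]; cbn [pred]; try pose proof (pow_nonzero D j H); rewrite ?S_INR, ?INR_0; rewrite ?pow_O, <- ?tech_pow_Rmult in *; genpow; match goal with |- ?u = ?v => change (@eq R u v) end.
  all: field; repeat split; auto.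
Qed.

Lemma evl_app m al l1 l2 x : evl m al (l1 ++ l2) x = evl m al l1 x + evl m al l2 x.
Proof. induction l1; simpl; [ring| rewrite IHl1; ring]. Qed.

Lemma evl_derive m al l x : Dn m al x <> 0 -> is_derive (evl m al l) x (evl m al (dl m al l) x).
Proof.
  intros H. induction l as [|u l IH].
  - simpl. apply (is_derive_ext (fun _ : R => 0)); [reflexivity|]. auto_derive; auto.
  - change (dl m al (u::l)) with (dt m al u ++ dl m al l). rewrite evl_app.
    apply (is_derive_ext (fun y => plus (ev m al u y) (evl m al l y))); [reflexivity|].
    change (evl m al (dt m al u) x + evl m al (dl m al l) x) with (plus (evl m al (dt m al u) x) (evl m al (dl m al l) x)).
    exact (@is_derive_plus R_AbsRing R_NormedModule (ev m al u) (evl m al l) x _ _ (ev_derive m al u x H) IH).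
Qed.

Lemma Dn_loc m al x : Dn m al x <> 0 -> locally x (fun y => Dn m al y <> 0).
Proof.
  intros H.
  assert (Hc : continuous (Dn m al) x).
  { apply (@ex_derive_continuous R_AbsRing R_NormedModule). unfold Dn. auto_derive. exact I. }
  assert (Hp : 0 < Rabs (Dn m al x)) by (apply Rabs_pos_lt; auto).
  apply (Hc (fun y : R => y <> 0)). exists (mkposreal _ Hp). intros y Hy Hy0.
  unfold ball in Hy; simpl in Hy; unfold AbsRing_ball, abs, minus, plus, opp in Hy; simpl in Hy.
  rewrite Hy0 in Hy. replace (0 + - Dn m al x) with (- Dn m al x) in Hy by ring.
  rewrite Rabs_Ropp in Hy. lra.
Qed.

Fixpoint itd m al n l := match n with O => l | S n => dl m al (itd m al n l) end.

Lemma itd_S m al n l : itd m al (S n) l = itd m al n (dl m al l).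
Proof. induction n; simpl; auto. simpl in IHn. rewrite IHn. reflexivity. Qed.

Lemma Dn_n m al l n : forall x, Dn m al x <> 0 ->
  Derive_n (evl m al l) n x = evl m al (itd m al n l) x /\ ex_derive_n (evl m al l) n x.
Proof.
  induction n as [|n IH]; intros x H.
  - simpl. split; auto.
  - assert (Hl : locally x (fun t => evl m al (itd m al n l) t = Derive_n (evl m al l) n t)).
    { apply (filter_imp (fun y => Dn m al y <> 0)); [|apply Dn_loc; auto].
      intros y Hy. symmetry. apply IH; auto. }
    split.
    + simpl. rewrite <- (Derive_ext_loc _ _ _ Hl). apply is_derive_unique. apply evl_derive; auto.
    + simpl. apply (ex_derive_ext_loc _ _ _ Hl). eexists. apply evl_derive; auto.
Qed.

Definition Pa k (l : list trm) := List.Forall (fun u => tc u = 0 \/ (k <= ta u)%nat) l.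
Definition Pb k (l : list trm) := List.Forall (fun u => tc u = 0 \/ (k <= tb u)%nat) l.

Lemma Pa_dl m al k l : Pa (S k) l -> Pa k (dl m al l).
Proof.
  unfold Pa, dl. induction 1 as [|u l Hu Hl IH]; [constructor|].
  change (flat_map (dt m al) (u::l)) with (dt m al u ++ flat_map (dt m al) l).
  apply List.Forall_app; split; auto.
  destruct u as [c a b j]; cbn [tc ta tb tj] in *. unfold dt; cbn [tc ta tb tj].
  destruct Hu as [Hc|Ha]; [subst c|];
  repeat apply List.Forall_cons; try apply List.Forall_nil; cbn [tc ta tb tj];
  first [left; ring | right; lia].
Qed.

Lemma Pb_dl m al k l : Pb (S k) l -> Pb k (dl m al l).
Proof.
  unfold Pb, dl. induction 1 as [|u l Hu Hl IH]; [constructor|].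
  change (flat_map (dt m al) (u::l)) with (dt m al u ++ flat_map (dt m al) l).
  apply List.Forall_app; split; auto.
  destruct u as [c a b j]; cbn [tc ta tb tj] in *. unfold dt; cbn [tc ta tb tj].
  destruct Hu as [Hc|Ha]; [subst c|];
  repeat apply List.Forall_cons; try apply List.Forall_nil; cbn [tc ta tb tj];
  first [left; ring | right; lia].
Qed.

Lemma Pa_itd m al n k l : Pa (n + k) l -> Pa k (itd m al n l).
Proof.
  revert k. induction n; intros k H; simpl; auto.
  apply Pa_dl. apply IHn. replace (n + S k)%nat with (S n + k)%nat by lia. auto.
Qed.

Lemma Pb_itd m al n k l : Pb (n + k) l -> Pb k (itd m al n l).
Proof.
  revert k. induction n; intros k H; simpl; auto.
  apply Pb_dl. apply IHn. replace (n + S k)%nat with (S n + k)%nat by lia. auto.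
Qed.

Lemma Pa_0 m al k l : (1 <= k)%nat -> Pa k l -> evl m al l 0 = 0.
Proof.
  intros Hk. unfold Pa. induction 1 as [|u l Hu Hl IH]; simpl; auto.
  rewrite IH. unfold ev. destruct Hu as [Hc|Ha].
  - rewrite Hc. unfold Rdiv. ring.
  - rewrite pow_i by lia. unfold Rdiv. ring.
Qed.

Lemma Pb_1 m al k l : (1 <= k)%nat -> Pb k l -> evl m al l 1 = 0.
Proof.
  intros Hk. unfold Pb. induction 1 as [|u l Hu Hl IH]; simpl; auto.
  rewrite IH. unfold ev. destruct Hu as [Hc|Ha].
  - rewrite Hc. unfold Rdiv. ring.
  - replace (1 - 1) with 0 by ring. rewrite pow_i by lia. unfold Rdiv. ring.
Qed.

Definition L0 := [mk 1 1 0 1].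

Lemma eta_L0 m al t : eta m al t = evl m al [mk 1 (S m) 0 1] t.
Proof.
  unfold eta, Phi, evl, ev, Dn; cbn [tc ta tb tj].
  rewrite Nat.add_1_r, pow_O, pow_1. unfold Rdiv; ring.
Qed.

Definition L1 m al := [mk 1 0 0 0; mk (-(al^(S m))) 0 (S m) 1].

Lemma eta_L1 m al t : Dn m al t <> 0 -> eta m al t = evl m al (L1 m al) t.
Proof.
  unfold eta, Phi, L1, evl, ev, Dn; cbn [tc ta tb tj].
  rewrite Nat.add_1_r, !pow_O, pow_1, !Rpow_mult_distr.
  generalize (t ^ S m) (al ^ S m) ((1-t) ^ S m). intros p q r H.
  field. auto.
Qed.

Lemma Dn_pos m al t : 0 < al -> 0 <= t <= 1 -> 0 < Dn m al t.
Proof.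
  intros Ha Ht. unfold Dn.
  destruct (Req_dec t 0) as [E|E].
  - subst t. rewrite pow_i by lia. replace (al * (1 - 0)) with al by ring.
    pose proof (pow_lt al (S m) Ha). lra.
  - assert (0 < t ^ S m) by (apply pow_lt; lra).
    assert (0 <= (al * (1 - t)) ^ S m) by (apply pow_le; nra). lra.
Qed.

Lemma Pb_L1 m al : Pb m (dl m al (L1 m al)).
Proof.
  unfold Pb, dl, L1, dt. cbn [flat_map app tc ta tb tj].
  repeat apply List.Forall_cons; try apply List.Forall_nil; cbn [tc ta tb tj INR];
  first [left; ring | right; lia].
Qed.

Theorem proposition2 (m : nat) (alpha : R) (halpha : 0 < alpha) :
  (* (i) and (ii) for every mu in {1,...,m} *)
  (forall mu : nat, (1 <= mu <= m)%nat ->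
     (forall t : R, 0 <= t <= 1 -> ex_derive_n (eta m alpha) mu t) /\
     Derive_n (eta m alpha) mu 0 = 0 /\
     Derive_n (eta m alpha) mu 1 = 0) /\
  (* (iii) *)
  eta m alpha 0 = 0 /\ eta m alpha 1 = 1 /\
  (* (iv) limit as alpha -> 0 (alpha > 0) *)
  (forall t : R, 0 < t <= 1 ->
     filterlim (fun a : R => eta m a t) (at_right 0) (locally 1)).
Proof.
  assert (H0 : Dn m alpha 0 <> 0) by (apply Rgt_not_eq, Dn_pos; lra).
  assert (H1 : Dn m alpha 1 <> 0) by (apply Rgt_not_eq, Dn_pos; lra).
  split; [|split; [|split]].
  - intros mu Hmu. split; [|split].
    + intros t Ht. apply (ex_derive_n_ext (evl m alpha [mk 1 (S m) 0 1])).
      { intros; symmetry; apply eta_L0. }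
      apply Dn_n. apply Rgt_not_eq, Dn_pos; lra.
    + rewrite (Derive_n_ext _ (evl m alpha [mk 1 (S m) 0 1]) _ _ (eta_L0 m alpha)).
      rewrite (proj1 (Dn_n m alpha _ mu 0 H0)).
      apply (Pa_0 m alpha (S m - mu)); [lia|].
      apply Pa_itd. replace (mu + (S m - mu))%nat with (S m) by lia.
      unfold Pa. apply List.Forall_cons; [right; simpl; lia | apply List.Forall_nil].
    + rewrite (Derive_n_ext_loc _ (evl m alpha (L1 m alpha))).
      2: { apply (filter_imp (fun y => Dn m alpha y <> 0)); [|apply Dn_loc; auto].
           intros y Hy. apply eta_L1; auto. }
      rewrite (proj1 (Dn_n m alpha _ mu 1 H1)).
      destruct mu as [|n]; [lia|]. rewrite itd_S.
      apply (Pb_1 m alpha (m - n)); [lia|].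
      apply Pb_itd. replace (n + (m - n))%nat with m by lia. apply Pb_L1.
  - unfold eta, Phi. rewrite pow_i by lia. unfold Rdiv; ring.
  - unfold eta, Phi. rewrite pow1. replace (alpha * (1 - 1)) with 0 by ring.
    rewrite pow_i by lia. rewrite Rplus_0_r. unfold Rdiv; rewrite Rinv_1; ring.
  - intros t Ht.
    assert (Ht1 : 0 < t ^ (m + 1)) by (apply pow_lt; lra).
    assert (Hc : continuous (fun a => eta m a t) 0).
    { apply (@ex_derive_continuous R_AbsRing R_NormedModule). unfold eta, Phi.
      auto_derive. replace (0 * (1 - t)) with 0 by ring. rewrite pow_i by lia. lra. }
    assert (Hv : eta m 0 t = 1).
    { unfold eta, Phi. replace (0 * (1 - t)) with 0 by ring. rewrite pow_i by lia.
      rewrite Rplus_0_r. field. lra. }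
    unfold continuous in Hc; cbv beta in Hc; rewrite Hv in Hc.
    apply (filterlim_filter_le_1 _ (F := locally 0)); [|exact Hc].
    intros P HP. unfold at_right, within. apply (filter_imp P); auto.
Qed.
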